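(* Let $(G,M,\Delta)$ be a Garside structure, $(H,N,\delta)$ a parabolic substructure, and $T$ the set of $(H,N)$-reduced elements of $G$. Let $c\in T\cap M$ and $\beta\in H$, and let $\beta=b_2^{-1}b_1$ be the left orthogonal form of $\beta$. Then $b_2\wedge_L(b_1c)=1$, and therefore $b_2^{-1}(b_1c)$ is the left orthogonal form of $\beta c$.
   Context: Let $G$ be a group and $M$ a submonoid with $M\cap M^{-1}=\{1\}$. Define $\alpha\le_L\beta$ iff $\alpha^{-1}\beta\in M$, and $\alpha\le_R\beta$ iff $\beta\alpha^{-1}\in M$. For $a\in M$ let $\mathrm{Div}_L(a)=\{b\in M: b\le_L a\}$, $\mathrm{Div}_R(a)=\{b\in M: b\le_R a\}$; $a$ is balanced if these coincide, and then $\mathrm{Div}(a)$ denotes this set. $M$ is Noetherian if each $a\in M$ admits an $n$ such that $a$ is not a product of more than $n$ non-trivial factors. A Garside structure $(G,M,\Delta)$: $\Delta\in M$ balanced, $M$ Noetherian, $\mathrm{Div}(\Delta)$ finite and generating $M$ as a monoid and $G$ as a group, $(G,\le_L)$ a lattice with meet $\wedge_L$. A parabolic substructure $(H,N,\delta)$: $\delta\in M$ balanced, $H$ (resp. $N$) the subgroup (resp. submonoid) generated by $\mathrm{Div}(\delta)$, and $\mathrm{Div}(\delta)=\mathrm{Div}(\Delta)\cap N$; it is assumed $H\ne\{1\}$. Put $\omega=\delta^{-1}\Delta$. $a\in M$ is unmovable if $\Delta\not\le_L a$; every $\alpha\in G$ has a unique right $\Delta$-form $\alpha=a\Delta^p$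 ($a\in M$ unmovable, $p\in\mathbb Z$). $a\in M$ is $N$-reduced if $a\wedge_L\delta=1$. $\alpha$ with right $\Delta$-form $a\Delta^p$ is $(H,N)$-reduced if $a$ is $N$-reduced and either $p=0$, or $p<0$ and $\omega\not\le_L a$. Every $\alpha\in G$ can be written uniquely as $\alpha=b^{-1}a$ with $a,b\in M$ and $a\wedge_L b=1$; this is its left orthogonal form. *)

(* Defs.v *)
From Stdlib Require Import List ZArith PeanoNat.
Import ListNotations.

Record Group := {
  carrier :> Type;
  gmul : carrier -> carrier -> carrier;
  gone : carrier;
  ginv : carrier -> carrier;
  gmulA : forall x y z, gmul x (gmul y z) = gmul (gmul x y) z;
  gmul1l : forall x, gmul gone x = x;
  gmulVl : forall x, gmul (ginv x) x = gone
}.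

Arguments gmul {G} : rename.
Arguments gone {G} : rename.
Arguments ginv {G} : rename.

Section Garside.
Context {G : Group}.

Definition gprod (l : list G) : G := fold_right (@gmul G) (@gone G) l.

Definition gsprod (l : list (G * bool)) : G :=
  fold_right (fun (p : G * bool) (acc : G) => gmul (if snd p then fst p else ginv (fst p)) acc) (@gone G) l.

Fixpoint gpow (x : G) (n : nat) : G :=
  match n with O => gone | S k => gmul x (gpow x k) end.

Definition gpowZ (x : G) (p : Z) : G :=
  match p with
  | Z0 => gone
  | Zpos n => gpow x (Pos.to_nat n)
  | Zneg n => ginv (gpow x (Pos.to_nat n))
  end.

Variable M : G -> Prop.

Definition pointed_submonoid : Prop :=
  M gone /\ (forall x y, M x -> M y -> M (gmul x y)) /\
  (forall x, M x -> M (ginv x) -> x = gone).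

Definition leL (a b : G) : Prop := M (gmul (ginv a) b).
Definition leR (a b : G) : Prop := M (gmul b (ginv a)).

Definition DivL (a b : G) : Prop := M b /\ leL b a.
Definition DivR (a b : G) : Prop := M b /\ leR b a.

Definition balanced (a : G) : Prop :=
  M a /\ forall b, DivL a b <-> DivR a b.

(* Div(a) for balanced a *)
Definition Div (a b : G) : Prop := DivL a b.

Definition noetherian : Prop :=
  forall a, M a -> exists n : nat,
    forall l : list G, Forall (fun x => M x /\ x <> gone) l -> gprod l = a ->
      length l <= n.

Definition is_meetL (m a b : G) : Prop :=
  leL m a /\ leL m b /\ forall c, leL c a -> leL c b -> leL c m.
Definition is_joinL (j a b : G) : Prop :=
  leL a j /\ leL b j /\ forall c, leL a c -> leL b c -> leL j c.

Definition lattice_L : Prop :=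
  forall a b, (exists m, is_meetL m a b) /\ (exists j, is_joinL j a b).

Definition gen_monoid (S : G -> Prop) (x : G) : Prop :=
  exists l : list G, Forall S l /\ x = gprod l.
Definition gen_group (S : G -> Prop) (x : G) : Prop :=
  exists l : list (G * bool), Forall (fun p => S (fst p)) l /\ x = gsprod l.

Definition garside_structure (Delta : G) : Prop :=
  pointed_submonoid /\
  balanced Delta /\
  noetherian /\
  (exists l : list G, forall b, Div Delta b -> In b l) /\
  (forall x, M x <-> gen_monoid (Div Delta) x) /\
  (forall x, gen_group (Div Delta) x) /\
  lattice_L.

(* (H, N, delta) parabolic substructure, with H := gen_group (Div delta),
   N := gen_monoid (Div delta) *)
Definition parabolic_substructure (Delta delta : G) : Prop :=
  balanced delta /\
  (forall b, Div delta b <-> (Div Delta b /\ gen_monoid (Div delta) b)) /\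
  (exists h, gen_group (Div delta) h /\ h <> gone).

Definition unmovable (Delta a : G) : Prop := M a /\ ~ leL Delta a.

Definition right_Delta_form (Delta alpha a : G) (p : Z) : Prop :=
  unmovable Delta a /\ alpha = gmul a (gpowZ Delta p).

Definition N_reduced (delta a : G) : Prop := M a /\ is_meetL gone a delta.

(* alpha is (H,N)-reduced; omega = delta^{-1} Delta *)
Definition HN_reduced (Delta delta alpha : G) : Prop :=
  exists a p, right_Delta_form Delta alpha a p /\ N_reduced delta a /\
    (p = 0%Z \/ ((p < 0)%Z /\ ~ leL (gmul (ginv delta) Delta) a)).

Definition left_orth_form (alpha a b : G) : Prop :=
  M a /\ M b /\ alpha = gmul (ginv b) a /\ is_meetL gone a b.

End Garside.

(* Main.v *)
Require Import Defs.
From Stdlib Require Import List ZArith Lia Classical.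
Import ListNotations.

Lemma gmulA' (G:Group) (x y z : G) : gmul (gmul x y) z = gmul x (gmul y z).
Proof. symmetry; apply gmulA. Qed.

Lemma gmulV' (G:Group) (x : G) : gmul x (ginv x) = gone.
Proof.
  rewrite <- (gmul1l G (gmul x (ginv x))).
  rewrite <- (gmulVl G (ginv x)) at 1.
  rewrite <- gmulA. rewrite (gmulA G (ginv x) x (ginv x)). rewrite gmulVl.
  rewrite gmul1l. apply gmulVl.
Qed.

Lemma mulr1 (G:Group) (x : G) : gmul x gone = x.
Proof. rewrite <- (gmulVl G x). rewrite gmulA. rewrite gmulV'. apply gmul1l. Qed.

Lemma mulKl (G:Group) (x y : G) : gmul (ginv x) (gmul x y) = y.
Proof. rewrite gmulA, gmulVl, gmul1l. reflexivity. Qed.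
Lemma mulKVl (G:Group) (x y : G) : gmul x (gmul (ginv x) y) = y.
Proof. rewrite gmulA, gmulV', gmul1l. reflexivity. Qed.

Lemma inv_uniq (G:Group) (a b : G) : gmul a b = gone -> ginv a = b.
Proof. intro H. rewrite <- (mulr1 G (ginv a)), <- H, mulKl. reflexivity. Qed.

Lemma invK (G:Group) (x : G) : ginv (ginv x) = x.
Proof. apply inv_uniq. apply gmulVl. Qed.
Lemma inv1 (G:Group) : ginv (@gone G) = gone.
Proof. apply inv_uniq. apply gmul1l. Qed.
Lemma invM (G:Group) (x y : G) : ginv (gmul x y) = gmul (ginv y) (ginv x).
Proof. apply inv_uniq. rewrite gmulA', mulKVl, gmulV'. reflexivity. Qed.

Ltac gs := repeat progress (rewrite ?gmulA', ?invM, ?invK, ?inv1, ?gmul1l, ?mulr1, ?gmulVl, ?gmulV', ?mulKl, ?mulKVl).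
Ltac gsin H := repeat progress (rewrite ?gmulA', ?invM, ?invK, ?inv1, ?gmul1l, ?mulr1, ?gmulVl, ?gmulV', ?mulKl, ?mulKVl in H).

Lemma Meq (G:Group) (M : G -> Prop) (x y : G) : M x -> x = y -> M y.
Proof. intros H ->; exact H. Qed.


Ltac meq H := eapply Meq; [exact H | gs; try reflexivity].


Lemma le_trans (G:Group) (M : G -> Prop) (PS : pointed_submonoid M) a b c :
  leL M a b -> leL M b c -> leL M a c.
Proof.
  destruct PS as [M1 [Mmul Manti]]. unfold leL; intros H1 H2.
  eapply Meq; [apply (Mmul _ _ H1 H2) | gs; reflexivity].
Qed.

Lemma le_anti (G:Group) (M : G -> Prop) (PS : pointed_submonoid M) a b :
  leL M a b -> leL M b a -> a = b.
Proof.
  destruct PS as [M1 [Mmul Manti]]. unfold leL; intros H1 H2.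
  assert (E : gmul (ginv a) b = gone).
  { apply Manti; [exact H1 | meq H2]. }
  rewrite <- (mulKVl G a b), E, mulr1. reflexivity.
Qed.

Lemma le1M (G:Group) (M : G -> Prop) x : leL M gone x <-> M x.
Proof. unfold leL; rewrite inv1, gmul1l; tauto. Qed.

Lemma leM1 (G:Group) (M : G -> Prop) x : leL M x gone <-> M (ginv x).
Proof. unfold leL; rewrite mulr1; tauto. Qed.

Lemma le_refl (G:Group) (M : G -> Prop) (PS : pointed_submonoid M) a : leL M a a.
Proof. destruct PS as [M1 _]. unfold leL; rewrite gmulVl; exact M1. Qed.

Lemma le_mul (G:Group) (M : G -> Prop) f a b : leL M a b -> leL M (gmul f a) (gmul f b).
Proof. unfold leL; intro H; meq H. Qed.

Lemma le_mulV (G:Group) (M : G -> Prop) f a b : leL M (gmul f a) (gmul f b) -> leL M a b.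
Proof. unfold leL; intro H; meq H. Qed.

Lemma le_ext (G:Group) (M : G -> Prop) a b (Ma : M a) : leL M a (gmul a b) <-> M b.
Proof. unfold leL; rewrite mulKl; tauto. Qed.

Lemma one_of (G:Group) (M : G -> Prop) (PS : pointed_submonoid M) x :
  M x -> leL M x gone -> x = gone.
Proof. intros. destruct PS as [_ [_ Manti]]. apply Manti; auto. apply leM1; auto. Qed.

Lemma Nn_M (G:Group) (M : G -> Prop) (PS : pointed_submonoid M) d x :
  gen_monoid (Div M d) x -> M x.
Proof.
  destruct PS as [M1 [Mmul _]]. intros [l [Hl ->]].
  induction Hl; simpl; auto. apply Mmul; auto. apply H.
Qed.

Lemma gprod_app (G:Group) (l1 l2 : list G) : gprod (l1 ++ l2) = gmul (gprod l1) (gprod l2).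
Proof. induction l1; simpl; gs; auto. rewrite IHl1. gs. reflexivity. Qed.

Lemma Nn_cons (G:Group) (S : G -> Prop) s x : S s -> gen_monoid S x -> gen_monoid S (gmul s x).
Proof. intros Hs [l [Hl ->]]. exists (s :: l); split; auto. Qed.

Lemma Nn_app (G:Group) (S : G -> Prop) x y : gen_monoid S x -> gen_monoid S y -> gen_monoid S (gmul x y).
Proof. intros [l [Hl ->]] [l' [Hl' ->]]. exists (l ++ l'); split.
  apply Forall_app; auto. symmetry; apply gprod_app. Qed.

Lemma Nn_1 (G:Group) (S : G -> Prop) : gen_monoid S gone.
Proof. exists []; split; auto. Qed.

Lemma M_of_le (G:Group) (M : G -> Prop) (PS : pointed_submonoid M) a b : M a -> leL M a b -> M b.
Proof. intros Ha Hab. apply (le1M G M). eapply le_trans; eauto. apply le1M; auto. Qed.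

Lemma compl (G:Group) (M : G -> Prop) a s : balanced M a -> Div M a s -> Div M a (gmul (ginv s) a).
Proof.
  intros [Ma B] [Ms Hs]. unfold leL in Hs. apply B. split; auto.
  unfold leR. meq Ms.
Qed.

Lemma conjD (G:Group) (M : G -> Prop) a s : balanced M a -> Div M a s ->
  exists u, Div M a u /\ gmul a s = gmul u a.
Proof.
  intros [Ma B] Hs. apply B in Hs. destruct Hs as [Ms Hs]. unfold leR in Hs.
  assert (Hu : DivL M a (gmul a (ginv s))).
  { split; auto. unfold leL. meq Ms. }
  apply B in Hu. destruct Hu as [_ Hu]. unfold leR in Hu.
  exists (gmul a (ginv (gmul a (ginv s)))). split.
  - split. exact Hu. unfold leL. meq Hs.
  - gs. reflexivity.
Qed.

Lemma conjD' (G:Group) (M : G -> Prop) a s : balanced M a -> Div M a s ->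
  exists w, M w /\ gmul s a = gmul a w.
Proof.
  intros [Ma B] [Ms Hs]. unfold leL in Hs.
  assert (Hw : DivR M a (gmul (ginv s) a)).
  { split; auto. unfold leR. meq Ms. }
  apply B in Hw. destruct Hw as [_ Hw]. unfold leL in Hw.
  exists (gmul (ginv (gmul (ginv s) a)) a). split. exact Hw. gs. reflexivity.
Qed.

Lemma conjM (G:Group) (M : G -> Prop) (PS : pointed_submonoid M) a :
  balanced M a -> (forall x, M x <-> gen_monoid (Div M a) x) ->
  forall c, M c -> M (gmul (ginv a) (gmul c a)).
Proof.
  intros Ba Mgen c Hc. apply Mgen in Hc. destruct Hc as [l [Hl ->]].
  destruct PS as [M1 [Mmul _]].
  induction Hl; simpl.
  - gs. exact M1.
  - destruct (conjD' G M a x Ba H) as [w [Mw Ew]].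
    eapply Meq. apply (Mmul _ _ Mw IHHl).
    rewrite <- (mulKl G a w), <- Ew. gs. reflexivity.
Qed.

Lemma conjN (G:Group) (M : G -> Prop) d : balanced M d ->
  forall z, gen_monoid (Div M d) z -> exists z', gen_monoid (Div M d) z' /\ gmul d z = gmul z' d.
Proof.
  intros Bd z [l [Hl ->]]. induction Hl; simpl.
  - exists gone. split. apply Nn_1. gs. reflexivity.
  - destruct IHHl as [z' [Hz' E]].
    destruct (conjD G M d x Bd H) as [u [Hu Eu]].
    exists (gmul u z'). split. apply Nn_cons; auto.
    rewrite gmulA, Eu, gmulA', E. gs. reflexivity.
Qed.

Ltac unpack HG HP :=
  let M1 := fresh "M1" in let Mmul := fresh "Mmul" in let Manti := fresh "Manti" in
  let PS := fresh "PS" in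
  let BD := fresh "BD" in let Noeth := fresh "Noeth" in let Mgen := fresh "Mgen" in
  let Lat := fresh "Lat" in let Bd := fresh "Bd" in let Par := fresh "Par" in
  destruct HG as [PS [BD [Noeth [_ [Mgen [_ Lat]]]]]];
  destruct HP as [Bd [Par _]];
  pose proof PS as [M1 [Mmul Manti]]; pose proof (proj1 BD) as MD; pose proof (proj1 Bd) as Md.

Lemma lemA (G:Group) (M : G -> Prop) (Delta delta : G)
  (HG : garside_structure M Delta) (HP : parabolic_substructure M Delta delta) :
  forall x, gen_monoid (Div M delta) x -> forall r, is_meetL M r x Delta -> Div M delta r.
Proof.
  unpack HG HP.
  intros x [l [Hl ->]]. induction Hl as [|s l Hs Hl IH]; intros r [Hr1 [Hr2 Hr3]]; simpl in *.
  - assert (r = gone).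
    { apply (le_anti G M PS). exact Hr1. apply Hr3. apply (le_refl G M PS). apply le1M; exact MD. }
    subst r. split; auto. apply le1M. exact Md.
  - destruct (Lat (gprod l) Delta) as [[t Ht] _].
    specialize (IH t Ht).
    destruct (Lat r s) as [_ [j [Hj1 [Hj2 Hj3]]]].
    assert (Nl : M (gprod l)) by (apply (Nn_M G M PS delta); exists l; auto).
    assert (HsD : Div M Delta s) by (apply Par; auto).
    assert (Ms : M s) by apply Hs.
    assert (Hjx : leL M j (gmul s (gprod l))).
    { apply Hj3; auto. apply le_ext; auto. }
    assert (HjD : leL M j Delta).
    { apply Hj3; auto. apply HsD. }
    assert (Mj : M j) by (apply (M_of_le G M PS s); auto).
    set (j' := gmul (ginv s) j).
    assert (Mj' : M j') by exact Hj2.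
    assert (Hj'x : leL M j' (gprod l)).
    { unfold j', leL. unfold leL in Hjx. meq Hjx. }
    assert (Hj'D : leL M j' Delta).
    { apply (le_trans G M PS _ (gmul (ginv s) Delta)).
      - unfold j', leL. unfold leL in HjD. meq HjD.
      - apply (compl G M Delta s BD HsD). }
    destruct Ht as [_ [_ Ht3]].
    assert (Dj' : Div M delta j').
    { split; auto. apply (le_trans G M PS _ t); [apply Ht3; auto | apply IH]. }
    assert (Dj : Div M delta j).
    { apply Par. split. split; auto.
      replace j with (gmul s j') by (unfold j'; gs; reflexivity).
      apply Nn_cons; auto. exists [j']; split; auto. simpl. gs. reflexivity. }
    split.
    + apply (M_of_le G M PS gone); auto. apply Hr3. apply le1M. apply Mmul; auto. apply le1M; exact MD.
    + eapply le_trans; eauto. apply Dj.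
Qed.

Lemma lemQ (G:Group) (M : G -> Prop) (Delta delta : G)
  (HG : garside_structure M Delta) (HP : parabolic_substructure M Delta delta) :
  forall x, gen_monoid (Div M delta) x -> forall h, Div M delta h -> leL M h x ->
  gen_monoid (Div M delta) (gmul (ginv h) x).
Proof.
  unpack HG HP.
  intros x [l [Hl ->]]. induction Hl as [|s l Hs Hl IH]; intros h Hh Hhx; simpl in *.
  - assert (h = gone) by (apply (one_of G M PS); [apply Hh | exact Hhx]).
    subst h. gs. apply Nn_1.
  - destruct (Lat h s) as [_ [j [Hj1 [Hj2 Hj3]]]].
    assert (Nl : M (gprod l)) by (apply (Nn_M G M PS delta); exists l; auto).
    assert (Ms : M s) by apply Hs.
    assert (Mh : M h) by apply Hh.
    assert (Hjx : leL M j (gmul s (gprod l))).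
    { apply Hj3; auto. apply le_ext; auto. }
    assert (Hjd : leL M j delta).
    { apply Hj3. apply Hh. apply Hs. }
    set (j' := gmul (ginv s) j).
    assert (Mj' : M j') by exact Hj2.
    assert (Hj'x : leL M j' (gprod l)).
    { unfold j', leL. unfold leL in Hjx. meq Hjx. }
    assert (Dj' : Div M delta j').
    { split; auto. apply (le_trans G M PS _ (gmul (ginv s) delta)).
      - unfold j', leL. unfold leL in Hjd. meq Hjd.
      - apply (compl G M delta s Bd Hs). }
    assert (Dhj : Div M delta (gmul (ginv h) j)).
    { split. exact Hj1. apply (le_trans G M PS _ (gmul (ginv h) delta)).
      - unfold leL. unfold leL in Hjd. meq Hjd.
      - apply (compl G M delta h Bd Hh). }
    specialize (IH j' Dj' Hj'x).
    replace (gmul (ginv h) (gmul s (gprod l))) with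
      (gmul (gmul (ginv h) j) (gmul (ginv j') (gprod l))) by (unfold j'; gs; reflexivity).
    apply Nn_cons; auto.
Qed.

Lemma lemQ' (G:Group) (M : G -> Prop) (Delta delta : G)
  (HG : garside_structure M Delta) (HP : parabolic_substructure M Delta delta) :
  forall h, gen_monoid (Div M delta) h -> forall x, gen_monoid (Div M delta) x -> leL M h x ->
  gen_monoid (Div M delta) (gmul (ginv h) x).
Proof.
  intros h [l [Hl ->]]. induction Hl as [|s l Hs Hl IH]; intros x Hx Hhx; simpl in *.
  - gs. exact Hx.
  - pose proof HG as HG'. destruct HG' as [PS _].
    assert (Nl : M (gprod l)) by (apply (Nn_M G M PS delta); exists l; auto).
    assert (Hsx : leL M s x).
    { apply (le_trans G M PS _ (gmul s (gprod l))); auto. apply le_ext; auto. apply Hs. }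
    pose proof (lemQ G M Delta delta HG HP x Hx s Hs Hsx) as Q.
    specialize (IH _ Q). replace (gmul (ginv (gmul s (gprod l))) x) with
      (gmul (ginv (gprod l)) (gmul (ginv s) x)) by (gs; reflexivity).
    apply IH. unfold leL in *. meq Hhx.
Qed.

Lemma firstnon (G:Group) (M : G -> Prop) (PS : pointed_submonoid M) D :
  forall l, Forall (Div M D) l -> gprod l <> gone ->
  exists s, Div M D s /\ s <> gone /\ leL M s (gprod l).
Proof.
  intros l Hl. induction Hl as [|s l Hs Hl IH]; simpl; intros Hne.
  - congruence.
  - destruct (classic (s = gone)) as [E|E].
    + subst s. rewrite gmul1l in *. destruct (IH Hne) as [s' [A [B C]]].
      exists s'; split; [exact A| split; [exact B| exact C]].
    + exists s; split; [exact Hs | split; [exact E|]]. apply le_ext. apply Hs.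
      apply (Nn_M G M PS D); exists l; auto.
Qed.

Lemma lemC (G:Group) (M : G -> Prop) (Delta delta : G)
  (HG : garside_structure M Delta) (HP : parabolic_substructure M Delta delta) :
  forall n y, (forall l, Forall (fun x => M x /\ x <> gone) l -> gprod l = y -> length l <= n) ->
  M y -> forall x, gen_monoid (Div M delta) x -> leL M y x -> gen_monoid (Div M delta) y.
Proof.
  pose proof (lemA G M Delta delta HG HP) as LA.
  pose proof (lemQ G M Delta delta HG HP) as LQ.
  unpack HG HP.
  induction n as [|n IH]; intros y Hb My x Hx Hyx;
    (destruct (classic (y = gone)) as [E|Ny]; [subst y; apply Nn_1|]).
  - specialize (Hb [y]). simpl in Hb. assert (1 <= 0) by (apply Hb; auto; rewrite mulr1; auto). lia.
  - destruct (proj1 (Mgen y) My) as [l [Hl El]].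
    destruct (firstnon G M PS Delta l Hl) as [s [Ds [Ns Hs]]]; [congruence|].
    rewrite <- El in Hs.
    destruct (Lat y Delta) as [[h [Hh1 [Hh2 Hh3]]] _].
    destruct (Lat x Delta) as [[m Hm] _].
    pose proof (LA x Hx m Hm) as Dm.
    destruct Hm as [Hm1 [Hm2 Hm3]].
    assert (Mh : M h).
    { apply (M_of_le G M PS gone); auto. apply Hh3; apply le1M; auto. }
    assert (Hhx : leL M h x) by (apply (le_trans G M PS _ y); auto).
    assert (Dh : Div M delta h).
    { split; auto. apply (le_trans G M PS _ m). apply Hm3; auto. apply Dm. }
    assert (Nh : h <> gone).
    { intro E. subst h. apply Ns. apply (one_of G M PS). apply Ds. apply Hh3; auto. apply Ds. }
    set (y' := gmul (ginv h) y).
    assert (Ny' : gen_monoid (Div M delta) y').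
    { apply (IH y') with (x := gmul (ginv h) x).
      - intros l' Hl' El'. assert (length (h :: l') <= S n).
        { apply Hb. constructor; auto. simpl. rewrite El'. unfold y'. gs. reflexivity. }
        simpl in H. lia.
      - exact Hh1.
      - apply LQ; auto.
      - unfold y', leL. unfold leL in Hyx. meq Hyx. }
    replace y with (gmul h y') by (unfold y'; gs; reflexivity).
    apply Nn_cons; auto.
Qed.

Lemma lemRa (G:Group) (M : G -> Prop) (Delta delta : G)
  (HG : garside_structure M Delta) (HP : parabolic_substructure M Delta delta) c :
  M c -> is_meetL M gone c delta ->
  forall m, gen_monoid (Div M delta) m -> forall s, Div M delta s -> leL M s (gmul m c) -> leL M s m.
Proof.
  unpack HG HP. intros Mc [_ [_ Hc]].
  intros m [l [Hl ->]]. induction Hl as [|t l Ht Hl IH]; intros s Hs Hsm; simpl in *.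
  - rewrite gmul1l in Hsm. apply Hc; auto. apply Hs.
  - destruct (Lat s t) as [_ [j [Hj1 [Hj2 Hj3]]]].
    assert (Nl : M (gprod l)) by (apply (Nn_M G M PS delta); exists l; auto).
    assert (Mt : M t) by apply Ht.
    assert (Hjx : leL M j (gmul (gmul t (gprod l)) c)).
    { apply Hj3; auto. rewrite gmulA'. apply le_ext; auto. }
    assert (Hjd : leL M j delta).
    { apply Hj3. apply Hs. apply Ht. }
    set (j' := gmul (ginv t) j).
    assert (Mj' : M j') by exact Hj2.
    assert (Dj' : Div M delta j').
    { split; auto. apply (le_trans G M PS _ (gmul (ginv t) delta)).
      - unfold j', leL. unfold leL in Hjd. meq Hjd.
      - apply (compl G M delta t Bd Ht). }
    assert (Hj'x : leL M j' (gmul (gprod l) c)).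
    { unfold j', leL. unfold leL in Hjx. meq Hjx. }
    specialize (IH j' Dj' Hj'x).
    apply (le_trans G M PS _ j); auto.
    unfold leL. unfold j', leL in IH. meq IH.
Qed.

Lemma lemR (G:Group) (M : G -> Prop) (Delta delta : G)
  (HG : garside_structure M Delta) (HP : parabolic_substructure M Delta delta) c :
  M c -> is_meetL M gone c delta ->
  forall y, gen_monoid (Div M delta) y -> forall m, gen_monoid (Div M delta) m -> leL M y (gmul m c) -> leL M y m.
Proof.
  intros Mc Hc.
  pose proof (lemRa G M Delta delta HG HP c Mc Hc) as Ra.
  pose proof (lemQ G M Delta delta HG HP) as LQ.
  pose proof HG as [PS _].
  intros y [l [Hl ->]]. induction Hl as [|s l Hs Hl IH]; intros m Hm Hym; simpl in *.
  - apply le1M. apply (Nn_M G M PS delta); auto.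
  - assert (Nl : M (gprod l)) by (apply (Nn_M G M PS delta); exists l; auto).
    assert (Hsm : leL M s (gmul m c)).
    { apply (le_trans G M PS _ (gmul s (gprod l))); auto. apply le_ext; auto. apply Hs. }
    specialize (Ra m Hm s Hs Hsm).
    specialize (IH _ (LQ m Hm s Hs Ra)).
    assert (leL M (gprod l) (gmul (ginv s) m)).
    { apply IH. unfold leL in *. meq Hym. }
    unfold leL in *. meq H.
Qed.

Lemma betaform (G:Group) (M : G -> Prop) (delta : G) (PS : pointed_submonoid M) (Bd : balanced M delta) beta :
  gen_group (Div M delta) beta -> exists X Y, gen_monoid (Div M delta) X /\
    gen_monoid (Div M delta) Y /\ beta = gmul (ginv X) Y.
Proof.
  intros [l [Hl ->]]. induction Hl as [|[s b] l Hs Hl IH]; simpl in *.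
  - exists gone, gone. split. apply Nn_1. split. apply Nn_1. gs. reflexivity.
  - destruct IH as [X [Y [HX [HY E]]]]. rewrite E. destruct b.
    + pose proof (compl G M delta s Bd Hs) as Hw.
      set (w := gmul (ginv s) delta) in *.
      assert (NZ : gen_monoid (Div M delta) (gmul X w)).
      { apply Nn_app; auto. exists [w]; split; auto. simpl; gs; reflexivity. }
      destruct (conjN G M delta Bd _ NZ) as [Z' [HZ' EZ]].
      exists Z', (gmul delta Y). split; auto. split.
      * apply Nn_cons; auto. split. exact (proj1 Bd). apply (le_refl G M PS).
      * assert (EZ' : Z' = gmul delta (gmul (gmul X w) (ginv delta))).
        { rewrite gmulA, EZ. gs. reflexivity. }
        rewrite EZ'. unfold w. gs. reflexivity.
    + exists (gmul X s), Y. split. apply Nn_app; auto. exists [s]; split; auto. simpl; gs; reflexivity.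
      split; auto. gs. reflexivity.
Qed.

Lemma gpow_M (G:Group) (M : G -> Prop) (PS : pointed_submonoid M) d : M d -> forall n, M (gpow d n).
Proof. destruct PS as [M1 [Mmul _]]. intros Md n; induction n; simpl; auto. Qed.

Lemma cred (G:Group) (M : G -> Prop) (Delta delta : G)
  (HG : garside_structure M Delta) c :
  HN_reduced M Delta delta c -> M c -> N_reduced M delta c.
Proof.
  destruct HG as [PS [BD [_ [_ [Mgen _]]]]].
  intros [a [p [[[Ma Ua] Ec] [Na Hp]]]] Mc.
  destruct Hp as [Hp | [Hp _]].
  - subst p. simpl in Ec. rewrite mulr1 in Ec. subst c. exact Na.
  - destruct p as [|k|k]; try lia. simpl in Ec.
    pose proof (Pos2Nat.is_pos k) as Hk.
    destruct (Pos.to_nat k) as [|m] eqn:Em; [lia|].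
    exfalso. apply Ua. simpl in Ec.
    assert (Ea : a = gmul c (gmul Delta (gpow Delta m))) by (rewrite Ec; gs; reflexivity).
    unfold leL. rewrite Ea.
    destruct PS as [M1 [Mmul Manti]].
    eapply Meq. apply Mmul. apply (conjM G M (conj M1 (conj Mmul Manti)) Delta BD Mgen c Mc).
    apply (gpow_M G M (conj M1 (conj Mmul Manti))). exact (proj1 BD).
    gs. reflexivity.
Qed.

Theorem lemma3p8 (G : Group) (M : G -> Prop) (Delta delta : G)
  (HG : garside_structure M Delta)
  (HP : parabolic_substructure M Delta delta)
  (c beta b1 b2 : G)
  (Hc : HN_reduced M Delta delta c) (HcM : M c)
  (Hbeta : gen_group (Div M delta) beta)
  (Hform : left_orth_form M beta b1 b2) :
  is_meetL M gone b2 (gmul b1 c) /\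
  left_orth_form M (gmul beta c) (gmul b1 c) b2.
Proof.
  pose proof (cred G M Delta delta HG c Hc HcM) as [_ Nc].
  pose proof (lemC G M Delta delta HG HP) as LC.
  pose proof (lemQ' G M Delta delta HG HP) as LQ'.
  pose proof (lemR G M Delta delta HG HP c HcM Nc) as LR.
  pose proof HG as HG'. pose proof HP as HP'.
  unpack HG' HP'.
  destruct Hform as [Mb1 [Mb2 [Eb [_ [_ Orth]]]]].
  destruct (betaform G M delta PS Bd beta Hbeta) as [X [Y [NX [NY EXY]]]].
  set (z := gmul X (ginv b2)).
  assert (Mz : M z).
  { assert (H : leL M (gmul b2 (ginv X)) gone).
    { apply Orth; unfold leL.
      - eapply Meq. apply (Nn_M G M PS delta Y NY).
        rewrite <- (mulKVl G X Y), <- EXY, Eb. gs. reflexivity.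
      - eapply Meq. apply (Nn_M G M PS delta X NX). gs. reflexivity. }
    apply leM1 in H. meq H. }
  assert (Nz : gen_monoid (Div M delta) z).
  { destruct (Noeth z Mz) as [n Hn].
    apply (LC n z Hn Mz X NX). unfold leL, z. meq Mb2. }
  assert (Nb2 : gen_monoid (Div M delta) b2).
  { assert (H := LQ' z Nz X NX). unfold z in H. gsin H. apply H. unfold leL. meq Mb2. }
  assert (Nb1 : gen_monoid (Div M delta) b1).
  { assert (E1 : b1 = gmul (ginv z) Y).
    { unfold z. rewrite <- (mulKVl G X Y), <- EXY, Eb. gs. reflexivity. }
    rewrite E1. apply LQ'; auto. unfold leL. rewrite <- E1. exact Mb1. }
  assert (Mb1c : M (gmul b1 c)) by auto.
  assert (Key : forall y, leL M y b2 -> leL M y (gmul b1 c) -> leL M y gone).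
  { intros y Hy2 Hy1.
    destruct (Lat y gone) as [_ [j [Hj1 [Hj2 Hj3]]]].
    assert (Mj : M j) by (apply le1M; exact Hj2).
    assert (Hjb2 : leL M j b2) by (apply Hj3; auto; apply le1M; auto).
    assert (Hjb1c : leL M j (gmul b1 c)) by (apply Hj3; auto; apply le1M; auto).
    assert (Nj : gen_monoid (Div M delta) j).
    { destruct (Noeth j Mj) as [n Hn]. apply (LC n j Hn Mj b2 Nb2 Hjb2). }
    assert (Hjb1 : leL M j b1) by (apply LR; auto).
    apply (le_trans G M PS _ j); auto. }
  split.
  - split. apply le1M; auto. split. apply le1M; auto. intros; apply Key; auto.
  - split; auto. split; auto. split.
    + rewrite Eb. gs. reflexivity.
    + split. apply le1M; auto. split. apply le1M; auto. intros; apply Key; auto.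
Qed.
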